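(* Let $n\geq 2$ and let $(x_i,y_i)_{i=1}^n$ be labeled examples with $x_i\in\mathbb{R}^d$, $y_i\in\{-1,+1\}$, $\max_i\|x_i\|\leq 1$. Let $Q\in\mathbb{R}^{n\times n}$ with $Q_{ij} = y_iy_j\langle x_i,x_j\rangle$, let $\sigma^2 \geq \frac{1}{n}\|Q\|$ (spectral norm), $\lambda>0$, $b\in\{1,\dots,n\}$ and $\beta_b := 1+\frac{(b-1)(n\sigma^2-1)}{n-1}$. For $\alpha,\delta\in\mathbb{R}^n$ define $$D(\alpha) := -\frac{1}{2\lambda n^2}\alpha^\top Q\alpha + \frac{1}{n}\sum_{i=1}^n\alpha_i,$$ $$H(\delta,\alpha) := -\frac{\alpha^\top Q\alpha + 2\alpha^\top Q\delta + \beta_b\|\delta\|^2}{2\lambda n^2} + \sum_{i=1}^n\frac{\alpha_i+\delta_i}{n}.$$ Then for any $\alpha,\delta\in\mathbb{R}^n$, if $A$ is drawn uniformly at random among subsets of $\{1,\dots,n\}$ of cardinality $b$, $$\mathbb{E}_A\big[D(\alpha+\delta_{[A]})\big] \geq \Big(1-\frac{b}{n}\Big)D(\alpha) + \frac{b}{n}H(\delta,\alpha),$$ where $\delta_{[A]}\in\mathbb{R}^n$ agrees with $\delta$ on coordinates in $A$ and is zero elsewhere.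
   Context: $D$ is the (unconstrained expression of the) SVM dual objective; $\|Q\|$ is the spectral norm of $Q$. *)

(* Defs.v *)
From HB Require Import structures.
From mathcomp Require Import all_boot all_order all_algebra.
From mathcomp Require Import classical_sets reals.
Set Implicit Arguments. Unset Strict Implicit. Unset Printing Implicit Defensive.
Import Order.TTheory GRing.Theory Num.Theory.
Local Open Scope ring_scope.
Local Open Scope classical_set_scope.

Section SVM.
Variable R : realType.

Definition dotr (d : nat) (u v : 'rV[R]_d) : R := \sum_(k < d) u 0 k * v 0 k.
Definition normr2 (d : nat) (u : 'rV[R]_d) : R := Num.sqrt (dotr u u).

Definition vnorm (n : nat) (v : 'cV[R]_n) : R := Num.sqrt (\sum_(i < n) v i 0 ^+ 2).

Definition spec_norm (n : nat) (M : 'M[R]_n) : R :=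
  sup [set vnorm (M *m v) | v in [set v : 'cV[R]_n | vnorm v <= 1]].

Definition Qmat (n d : nat) (x : 'I_n -> 'rV[R]_d) (y : 'I_n -> R) : 'M[R]_n :=
  \matrix_(i, j) (y i * y j * dotr (x i) (x j)).

Definition qform (n : nat) (M : 'M[R]_n) (u v : 'cV[R]_n) : R := (u^T *m M *m v) 0 0.

Definition Dobj (n : nat) (Q : 'M[R]_n) (lam : R) (a : 'cV[R]_n) : R :=
  - (qform Q a a) / (2 * lam * n%:R ^+ 2) + (\sum_(i < n) a i 0) / n%:R.

Definition beta_b (n b : nat) (sigma : R) : R :=
  1 + (b.-1)%:R * (n%:R * sigma ^+ 2 - 1) / (n.-1)%:R.

Definition Hobj (n : nat) (Q : 'M[R]_n) (lam beta : R) (del a : 'cV[R]_n) : R :=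
  - (qform Q a a + 2 * qform Q a del + beta * vnorm del ^+ 2) / (2 * lam * n%:R ^+ 2)
  + \sum_(i < n) (a i 0 + del i 0) / n%:R.

Definition restrict (n : nat) (del : 'cV[R]_n) (A : {set 'I_n}) : 'cV[R]_n :=
  \col_i (if i \in A then del i 0 else 0).

Definition E_subsets (n b : nat) (f : {set 'I_n} -> R) : R :=
  (\sum_(A : {set 'I_n} | #|A| == b) f A) / 'C(n, b)%:R.

End SVM.

(* Main.v *)
Require Import Defs.
From HB Require Import structures.
From mathcomp Require Import all_boot all_order all_algebra.
From mathcomp Require Import classical_sets reals.
From mathcomp Require Import ring lra.
Import finset fintype.
Set Implicit Arguments. Unset Strict Implicit. Unset Printing Implicit Defensive.
Import Order.TTheory GRing.Theory Num.Theory.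
Local Open Scope ring_scope.

Lemma card_sup (T : finType) (C : {set T}) k : (#|C| <= k)%N ->
 #|[set A : {set T} | (C \subset A) && (#|A| == k)]| = 'C(#|T| - #|C|, k - #|C|).
Proof.
move=> hC.
have hcC : #|~: C| = (#|T| - #|C|)%N by rewrite cardsCs finset.setCK.
rewrite -hcC -cards_draws.
have -> : [set A : {set T} | (C \subset A) && (#|A| == k)] =
   (fun B => B :|: C) @: [set B : {set T} | (B \subset ~: C) && (#|B| == k - #|C|)%N].
  apply/setP=> A; rewrite inE; apply/andP/imsetP.
  - move=> [hCA /eqP hA]; exists (A :\: C); last first.
      apply/setP=> x; rewrite !inE; case: (boolP (x \in C)) => hx /=; rewrite ?orbF //.
      by rewrite (subsetP hCA).
    rewrite inE; apply/andP; split; first by apply/subsetP=> x; rewrite !inE => /andP[].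
    by rewrite cardsDS // hA.
  - move=> [B]; rewrite inE => /andP[hB /eqP hBk] ->.
    split; first by apply/subsetP => z hz; rewrite !inE hz orbT.
    rewrite cardsU.
    have -> : B :&: C = finset.set0.
      apply/setP=> x; rewrite !inE; case: (boolP (x \in B)) => hx //=.
      by have := subsetP hB x hx; rewrite inE => /negbTE.
    by rewrite cards0 subn0 hBk subnK.
rewrite card_in_imset // => B1 B2; rewrite !inE => /andP[h1 _] /andP[h2 _] E.
apply/setP=> x; move/setP: E => /(_ x); rewrite !inE.
have := subsetP h1 x; have := subsetP h2 x; rewrite !inE.
case: (x \in C); case: (x \in B1); case: (x \in B2) => //=.
- by move=> _ /(_ isT).
Qed.

Definition cnt (n b : nat) (C : {set 'I_n}) :=
  #|[set A : {set 'I_n} | (C \subset A) && (#|A| == b)]|.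

Lemma cnt1 n b (i : 'I_n) : (1 <= b)%N -> cnt b [set i] = 'C(n.-1, b.-1).
Proof. by move=> hb; rewrite /cnt card_sup cards1 ?card_ord ?subn1. Qed.

Lemma cnt2 n b (i j : 'I_n) : (1 <= b)%N -> i != j ->
  (n.-1 * cnt b [set i; j] = b.-1 * cnt b [set i])%N.
Proof.
move=> hb hij; rewrite cnt1 //.
case: b hb => [//|[|b]] _.
  rewrite /= mul0n; apply/eqP; rewrite muln_eq0; apply/orP; right.
  rewrite /cnt; apply/eqP/eq_card0 => A; rewrite !inE.
  apply/negP => /andP[hs /eqP hA].
  by have := subset_leq_card hs; rewrite hA cards2 hij.
rewrite /cnt card_sup ?cards2 ?hij ?card_ord //=.
have := mul_bin_diag n.-1 b.
have -> : (n - 2 = n.-2)%N by rewrite -!subn1 -subnDA.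
by rewrite !subSS ?subn0.
Qed.

Lemma cntN n b : (1 <= b)%N ->
  (n * 'C(n.-1, b.-1) = b * #|[set A : {set 'I_n} | #|A| == b]|)%N.
Proof.
by move=> hb; rewrite card_draws card_ord; case: b hb => // b _; rewrite mul_bin_diag.
Qed.

Section S.
Variable R : realType.

Lemma sum_if n b (C : {set 'I_n}) (c : R) :
  \sum_(A : {set 'I_n} | #|A| == b) (if C \subset A then c else 0) = c *+ cnt b C.
Proof.
rewrite -big_mkcondr /= /cnt -sumr_const; apply: eq_bigl => A.
by rewrite !inE andbC.
Qed.

Lemma sum_const_card n b (c : R) :
  \sum_(A : {set 'I_n} | #|A| == b) c = c *+ #|[set A : {set 'I_n} | #|A| == b]|.
Proof. by rewrite -sumr_const; apply: eq_bigl => A; rewrite !inE. Qed.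

Definition qf n (M : 'M[R]_n) (u v : 'cV[R]_n) :=
  \sum_i \sum_j u i 0 * M i j * v j 0.

Lemma qformE n (M : 'M[R]_n) u v : qform M u v = qf M u v.
Proof.
rewrite /qform /qf mxE; under eq_bigr do rewrite mxE big_distrl /=.
rewrite exchange_big; apply: eq_bigr => i _; apply: eq_bigr => j _.
by rewrite !mxE.
Qed.

Lemma qform_sym n (M : 'M[R]_n) u v : M^T = M -> qform M u v = qform M v u.
Proof.
move=> hM; rewrite /qform.
have E : forall (X : 'M[R]_1), X 0 0 = X^T 0 0 by move=> X; rewrite mxE.
by rewrite E trmx_mul trmx_mul trmxK hM mulmxA.
Qed.

Lemma qformD n (M : 'M[R]_n) a u : M^T = M ->
  qform M (a + u) (a + u) = qform M a a + 2 * qform M a u + qform M u u.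
Proof.
move=> hM; have := qform_sym u a hM; rewrite /qform => h.
rewrite !raddfD /= ?mulmxDl ?mulmxDr ?mulmxDl !mxE; move: h; rewrite !mxE => ->; ring.
Qed.


Lemma prod_sums n (f g : 'I_n -> R) :
  (\sum_i f i) * (\sum_j g j) = \sum_i \sum_j f i * g j.
Proof. by rewrite mulr_suml; apply: eq_bigr => i _; rewrite mulr_sumr. Qed.

Lemma CS2 n (a c : 'I_n -> R) :
  (\sum_i a i * c i) ^+ 2 <= (\sum_i a i ^+ 2) * (\sum_i c i ^+ 2).
Proof.
set A := \sum_i a i ^+ 2; set B := \sum_i c i ^+ 2; set C := \sum_i a i * c i.
have H : \sum_i \sum_j (a i * c j - a j * c i) ^+ 2 = 2 * (A * B) - 2 * C ^+ 2.
  have inner : forall i, \sum_j (a i * c j - a j * c i) ^+ 2 =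
      a i ^+ 2 * B + c i ^+ 2 * A - 2 * (a i * c i) * C.
    move=> i; rewrite /A /B /C !mulr_sumr -big_split -sumrB; apply: eq_bigr => j _.
simpl; ring.
  under eq_bigr do rewrite inner.
  rewrite sumrB big_split /= -!mulr_suml -mulr_sumr -/A -/B -/C; ring.
have : 0 <= \sum_i \sum_j (a i * c j - a j * c i) ^+ 2.
  by apply: sumr_ge0 => i _; apply: sumr_ge0 => j _; apply: sqr_ge0.
rewrite H subr_ge0 => h; rewrite -(ler_pM2l (_ : (0:R) < 2)) //.
Qed.

Lemma CS n (a c : 'I_n -> R) :
  \sum_i a i * c i <= Num.sqrt (\sum_i a i ^+ 2) * Num.sqrt (\sum_i c i ^+ 2).
Proof.
rewrite -sqrtrM; last by apply: sumr_ge0 => i _; apply: sqr_ge0.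
apply: le_trans (ler_norm _) _; rewrite -sqrtr_sqr ler_sqrt ?CS2 //.
by apply: mulr_ge0; apply: sumr_ge0 => i _; apply: sqr_ge0.
Qed.

Lemma vnorm2 n (v : 'cV[R]_n) : vnorm v ^+ 2 = \sum_i v i 0 ^+ 2.
Proof. by rewrite /vnorm sqr_sqrtr //; apply: sumr_ge0 => i _; apply: sqr_ge0. Qed.

Lemma sqrt_le1 (z : R) : 0 <= z -> Num.sqrt z <= 1 -> z <= 1.
Proof. by move=> hz; rewrite -{1}sqrtr1 ler_sqrt. Qed.


Lemma vnorm0 n : vnorm (0 : 'cV[R]_n) = 0.
Proof. by rewrite /vnorm big1 ?sqrtr0 // => i _; rewrite mxE expr0n. Qed.

Lemma spec_has_sup n (M : 'M[R]_n) :
  has_sup [set vnorm (M *m v) | v in [set v : 'cV[R]_n | vnorm v <= 1]].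
Proof.
split.
  exists (vnorm (M *m 0)); exists 0 => //; by rewrite /= vnorm0.
exists (Num.sqrt (\sum_i (\sum_j `|M i j|) ^+ 2)) => z [v hv <-].
have hs : \sum_i v i 0 ^+ 2 <= 1.
  by apply: sqrt_le1 => //; apply: sumr_ge0 => i _; apply: sqr_ge0.
have hvj : forall j, `|v j 0| <= 1.
  move=> j; have : v j 0 ^+ 2 <= 1.
    apply: le_trans hs; rewrite (bigD1 j) //= lerDl.
    by apply: sumr_ge0 => i _; apply: sqr_ge0.
  rewrite -real_normK ?num_real // => h; have := normr_ge0 (v j 0); nra.
rewrite /vnorm ler_sqrt; last by apply: sumr_ge0 => i _; apply: sqr_ge0.
apply: ler_sum => i _; rewrite mxE.
have h1 : `|\sum_j M i j * v j 0| <= \sum_j `|M i j|.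
  apply: le_trans (ler_norm_sum _ _ _) _; apply: ler_sum => j _.
  rewrite normrM; have := hvj j; have := normr_ge0 (M i j); nra.
rewrite -real_normK ?num_real //; have := normr_ge0 (\sum_j M i j * v j 0); nra.
Qed.

Lemma spec_ub n (M : 'M[R]_n) (v : 'cV[R]_n) : vnorm v <= 1 -> vnorm (M *m v) <= spec_norm M.
Proof. by move=> hv; apply: (sup_upper_bound (spec_has_sup M)); exists v. Qed.

Lemma qf_spec n (M : 'M[R]_n) (v : 'cV[R]_n) : qf M v v <= spec_norm M * vnorm v ^+ 2.
Proof.
rewrite vnorm2; set s := \sum_i v i 0 ^+ 2.
have s0 : 0 <= s by apply: sumr_ge0 => i _; apply: sqr_ge0.
have [s00 | spos] : s = 0 \/ 0 < s by rewrite le_eqVlt eq_sym in s0; case/orP: s0 => [/eqP|]; auto.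
  have hv : forall i, v i 0 = 0.
    move=> i; apply/eqP; rewrite -sqrf_eq0; apply/eqP.
    by apply: (psumr_eq0P _ s00) => // j _; apply: sqr_ge0.
  rewrite s00 mulr0 /qf big1 // => i _; rewrite big1 // => j _; by rewrite !hv !(mul0r, mulr0).
set r := Num.sqrt s.
have rpos : 0 < r by rewrite sqrtr_gt0.
have r2 : r ^+ 2 = s by rewrite sqr_sqrtr.
set u := r^-1 *: v.
have hu : \sum_i u i 0 ^+ 2 = 1.
  rewrite (eq_bigr (fun i => r^-2 * v i 0 ^+ 2)); last by move=> i _; rewrite mxE exprMn exprVn.
  rewrite -mulr_sumr -/s -r2 mulVf // expf_neq0 // gt_eqF //.
have hqf : qf M v v = s * qf M u u.
  rewrite /qf mulr_sumr; apply: eq_bigr => i _; rewrite mulr_sumr; apply: eq_bigr => j _.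
  rewrite !mxE -r2; field; by rewrite gt_eqF.
have hqu : qf M u u = \sum_i u i 0 * (M *m u) i 0.
  rewrite /qf; apply: eq_bigr => k _; rewrite [(M *m u) _ _]mxE mulr_sumr; apply: eq_bigr => j _.
  by rewrite mulrA.
have hvu : vnorm u <= 1 by rewrite /vnorm hu sqrtr1.
have : qf M u u <= spec_norm M.
  rewrite hqu; apply: le_trans (CS _ _) _; rewrite hu sqrtr1 mul1r.
  exact: spec_ub.
move=> h; rewrite hqf mulrC; apply: ler_wpM2r => //.
Qed.


Lemma restrictE n (del : 'cV[R]_n) A i : restrict del A i 0 = if i \in A then del i 0 else 0.
Proof. by rewrite /restrict mxE. Qed.

Lemma addcE n (a u : 'cV[R]_n) i : (a + u) i 0 = a i 0 + u i 0.
Proof. by rewrite mxE. Qed.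

Lemma final_arith (Nr nr br K qaa Sa X Y S beta V : R) :
  0 < Nr -> 0 < nr -> 0 < K -> S <= br * Nr / nr * beta * V ->
  (1 - br / nr) * (- qaa / K + Sa / nr) +
  br / nr * (- (qaa + 2 * X + beta * V) / K + (Sa + Y) / nr)
  <= (Nr * (- qaa / K + Sa / nr) - (2 * (br * Nr / nr * X) + S) / K
      + br * Nr / nr * Y / nr) / Nr.
Proof.
move=> hN hn hK hS; rewrite -subr_ge0.
have -> : (Nr * (- qaa / K + Sa / nr) - (2 * (br * Nr / nr * X) + S) / K
      + br * Nr / nr * Y / nr) / Nr - ((1 - br / nr) * (- qaa / K + Sa / nr) +
  br / nr * (- (qaa + 2 * X + beta * V) / K + (Sa + Y) / nr))
  = (br * Nr / nr * beta * V - S) / (Nr * K).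
  by field; rewrite !gt_eqF.
by apply: divr_ge0; rewrite ?subr_ge0 // mulr_ge0 // ltW.
Qed.

End S.

Theorem lemma3 (R : realType) (n d : nat) (x : 'I_n -> 'rV[R]_d) (y : 'I_n -> R)
  (sigma lam : R) (b : nat) :
  (2 <= n)%N ->
  (forall i, y i = 1 \/ y i = -1) ->
  (forall i, normr2 (x i) <= 1) ->
  spec_norm (Qmat x y) / n%:R <= sigma ^+ 2 ->
  0 < lam ->
  (1 <= b <= n)%N ->
  forall alpha delta : 'cV[R]_n,
    E_subsets b (fun A => Dobj (Qmat x y) lam (alpha + restrict delta A))
    >= (1 - b%:R / n%:R) * Dobj (Qmat x y) lam alpha
       + b%:R / n%:R * Hobj (Qmat x y) lam (beta_b n b sigma) delta alpha.
Proof.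
move=> hn hy hx hspec hlam /andP[hb1 hbn] alpha delta.
have hQT : (Qmat x y)^T = Qmat x y.
  apply/matrixP => i j; rewrite !mxE /dotr [y j * y i]mulrC; congr (_ * _).
  by apply: eq_bigr => k _; rewrite mulrC.
have hQii : forall i, Qmat x y i i <= 1.
  move=> i; rewrite mxE.
  have -> : y i * y i = 1 by case: (hy i) => ->; rewrite ?mulr1 ?mulrNN ?mulr1.
  rewrite mul1r; apply: sqrt_le1; last exact: hx.
  by apply: sumr_ge0 => k _; rewrite -expr2 sqr_ge0.
set Q := Qmat x y.
have hn0 : (0 < n)%N by apply: leq_trans hn.
have hnr : (0 : R) < n%:R by rewrite ltr0n.
set N := #|[set A : {set 'I_n} | #|A| == b]|.
have hN : 'C(n, b) = N by rewrite /N card_draws card_ord.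
have hN0 : (0 < N)%N by rewrite -hN bin_gt0.
have hNr : (0 : R) < N%:R by rewrite ltr0n.
set c1 := 'C(n.-1, b.-1).
have hc1 : c1%:R = b%:R * N%:R / n%:R :> R.
  have := cntN n hb1; rewrite -/c1 -/N => /(congr1 (fun m => m%:R : R)).
  rewrite !natrM => h; apply: (mulIf (lt0r_neq0 hnr)).
  by rewrite mulrC h mulfVK // lt0r_neq0.
set K := 2 * lam * n%:R ^+ 2.
have hK : 0 < K by rewrite /K mulr_gt0 ?mulr_gt0 ?exprn_gt0.
set u := restrict delta.
set X := qform Q alpha delta.
set Y := \sum_i delta i 0.
have hF : forall A, Dobj Q lam (alpha + u A) = Dobj Q lam alpha
    - (2 * qform Q alpha (u A) + qform Q (u A) (u A)) / K + (\sum_i u A i 0) / n%:R.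
  move=> A; rewrite /Dobj qformD //.
  rewrite (eq_bigr (fun i => alpha i 0 + u A i 0)) ?big_split /=; last by move=> i _; rewrite addcE.
  rewrite -/K; ring.
have hS1 : \sum_(A : {set 'I_n} | #|A| == b) \sum_i u A i 0 = c1%:R * Y.
  rewrite exchange_big /= /Y mulr_sumr; apply: eq_bigr => i _.
  under eq_bigr => A _ do rewrite /u restrictE -finset.sub1set.
  by rewrite sum_if cnt1 // mulr_natl.
have hS2 : \sum_(A : {set 'I_n} | #|A| == b) qform Q alpha (u A) = c1%:R * X.
  under eq_bigr do rewrite qformE.
  rewrite /X qformE /qf exchange_big mulr_sumr; apply: eq_bigr => i _ /=.
  rewrite exchange_big mulr_sumr; apply: eq_bigr => j _ /=.
  under eq_bigr => A _ do rewrite /u restrictE (fun_if (fun t => alpha i 0 * Q i j * t)) mulr0 -finset.sub1set.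
  by rewrite sum_if cnt1 // mulr_natl.
set c2 : R := c1%:R * (b.-1)%:R / (n.-1)%:R.
have hnm1 : (0:R) < (n.-1)%:R by rewrite ltr0n -subn1 subn_gt0.
have hcnt : forall i j : 'I_n, (cnt b (finset.set1 i :|: finset.set1 j))%:R = (if i == j then c1%:R else c2 : R).
  move=> i j; case: (i =P j) => [->|/eqP hij].
    by rewrite finset.setUid cnt1.
  have := cnt2 hb1 hij; move/(congr1 (fun m => m%:R : R)); rewrite !natrM cnt1 // -/c1 => h.
  rewrite /c2 (mulrC c1%:R) -h; field; by rewrite lt0r_neq0.
have hS3 : \sum_(A : {set 'I_n} | #|A| == b) qform Q (u A) (u A)
    = c2 * qf Q delta delta + (c1%:R - c2) * \sum_i delta i 0 * Q i i * delta i 0.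
  under eq_bigr do rewrite qformE.
  rewrite /qf exchange_big /=.
  transitivity (\sum_i \sum_j delta i 0 * Q i j * delta j 0 * (if i == j then c1%:R else c2)).
    apply: eq_bigr => i _; rewrite exchange_big; apply: eq_bigr => j _ /=.
    have ifE : forall A : {set 'I_n}, (if i \in A then delta i 0 else 0) * Q i j * (if j \in A then delta j 0 else 0)
       = if (finset.set1 i :|: finset.set1 j) \subset A then delta i 0 * Q i j * delta j 0 else 0.
      move=> A; rewrite finset.subUset !finset.sub1set.
      by case: (i \in A); case: (j \in A); rewrite ?mulr0 ?mul0r.
    under eq_bigr => A _ do rewrite /u !restrictE ifE.
    by rewrite sum_if -hcnt mulr_natr.
  rewrite [c2 * _]mulr_sumr [(_ - c2) * _]mulr_sumr -big_split /=; apply: eq_bigr => i _.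
  rewrite (bigD1 i) //= eqxx [in RHS](bigD1 i) //= mulrDr.
  have -> : \sum_(j | j != i) delta i 0 * Q i j * delta j 0 * (if i == j then c1%:R else c2)
     = \sum_(j | j != i) delta i 0 * Q i j * delta j 0 * c2.
    by apply: eq_bigr => j hj; rewrite eq_sym (negbTE hj).
  rewrite -mulr_suml; ring.
have hqf : qf Q delta delta <= n%:R * sigma ^+ 2 * vnorm delta ^+ 2.
  apply: le_trans (qf_spec _ _) _; apply: ler_wpM2r; first exact: sqr_ge0.
  by move: hspec; rewrite ler_pdivrMr // mulrC.
have hdiag : \sum_i delta i 0 * Q i i * delta i 0 <= vnorm delta ^+ 2.
  rewrite vnorm2; apply: ler_sum => i _; have := hQii i; have := sqr_ge0 (delta i 0); nra.
have hc2 : 0 <= c2 by rewrite /c2 divr_ge0 // mulr_ge0.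
have hc12 : 0 <= c1%:R - c2.
  rewrite subr_ge0 /c2 -mulrA; rewrite -{2}(mulr1 c1%:R); apply: ler_wpM2l => //.
  rewrite ler_pdivrMr // mul1r ler_nat -!subn1 leq_sub2r //.
have hbeta : c1%:R * beta_b n b sigma = c2 * (n%:R * sigma ^+ 2) + (c1%:R - c2).
  rewrite /beta_b /c2; field; by rewrite lt0r_neq0.
have hS3le : \sum_(A : {set 'I_n} | #|A| == b) qform Q (u A) (u A)
    <= c1%:R * beta_b n b sigma * vnorm delta ^+ 2.
  rewrite hS3 hbeta [(_ + (_ - _)) * _]mulrDl; apply: lerD.
    by rewrite -[c2 * _ * _]mulrA; apply: ler_wpM2l.
  by apply: ler_wpM2l.
rewrite /E_subsets /= hN.
under eq_bigr do rewrite hF.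
set Da := Dobj Q lam alpha.
set Hb := Hobj _ _ _ _ _.
rewrite big_split /= sumrB sum_const_card -/N -[Da *+ N]mulr_natl.
rewrite -!mulr_suml big_split /= -mulr_sumr hS1 hS2.
rewrite /Hb /Hobj -mulr_suml big_split /= -/Y.
move: hS3le; rewrite hc1 => hS3le.
exact: (@final_arith R N%:R n%:R b%:R K (qform Q alpha alpha) (\sum_i alpha i 0) X Y _ _ _ hNr hnr hK hS3le).
Qed.
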